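(* Let $\mu$ be a partition of $n+k$ and $(i,j)$ a cell of $\mu$. Define $$I^k_{i,j}=\{P\in\mathbb{Q}[X_n,Y_n]: P(\partial)Q=0\ \text{for all } Q\in M^k_{i,j}\}.$$ Then $$I^k_{i,j}=\bigcap_{(a_1,b_1),\dots,(a_k,b_k)} I_{\partial x_{n+1}^{a_1}\partial y_{n+1}^{b_1}\cdots\partial x_{n+k}^{a_k}\partial y_{n+k}^{b_k}\Delta_\mu}\ \cap\ \mathbb{Q}[X_n,Y_n],$$ where the intersection runs over all $k$-tuples of distinct cells of $S_\mu(i,j)$ listed in increasing order. Here $\Delta_\mu=\Delta_\mu(X_{n+k},Y_{n+k})$, and for a polynomial $R\in\mathbb{Q}[X_{n+k},Y_{n+k}]$, $I_R$ denotes the set of $P\in\mathbb{Q}[X_{n+k},Y_{n+k}]$ such that $P(\partial)$ kills every partial derivative of $R$.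
   Context: Write $X_m=(x_1,\dots,x_m)$ and $Y_m=(y_1,\dots,y_m)$. For a partition $\mu=(\mu_1\ge\dots\ge\mu_h>0)$, its Ferrers diagram is $\{(a,b):0\le a\le h-1,\ 0\le b\le\mu_{a+1}-1\}$. Cells are ordered by $(p,q)<(p',q')$ iff $q<q'$, or $q=q'$ and $p<p'$. For a lattice diagram $L$ (a finite subset of $\mathbb{N}^2$) with cells $(p_1,q_1)<\dots<(p_m,q_m)$, set $\Delta_L=\det(x_r^{p_t}y_r^{q_t})_{1\le r,t\le m}\in\mathbb{Q}[X_m,Y_m]$, and let $M_L$ be the span of all partial derivatives of $\Delta_L$. For a polynomial $P$, $P(\partial)$ substitutes $\partial/\partial x_r$ and $\partial/\partial y_r$ for $x_r$ and $y_r$. The shadow is $S_\mu(i,j)=\{(a,b)\in\mu:a\ge i,\ b\ge j\}$. The space $M^k_{i,j}=\sum M_{\mu\setminus\{c_1,\dots,c_k\}}\subseteq\mathbb{Q}[X_n,Y_n]$, summed over all sets of $k$ distinct cells of $S_\mu(i,j)$. *)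

(* Defs.v *)
From HB Require Import structures.
From mathcomp Require Import all_boot all_algebra.
From mathcomp Require Import mpoly.
Import GRing.Theory.
Local Open Scope ring_scope.

(* Q[X_N, Y_N]: variables indexed by 'I_(N+N); x_r = 'X_(lshift N r), y_r = 'X_(rshift N r) *)
Definition QXY (N : nat) := {mpoly rat[N + N]}.
Definition xv (N : nat) (r : 'I_N) : QXY N := 'X_(lshift N r).
Definition yv (N : nat) (r : 'I_N) : QXY N := 'X_(rshift N r).

(* P(d) Q : substitute d/dx_r, d/dy_r for x_r, y_r in P and apply to Q *)
Definition diffop (N : nat) (P Q : QXY N) : QXY N :=
  \sum_(m <- msupp P) P@_m *: mderivm m Q.

Definition cell := (nat * nat)%type.
Definition cell_lt (c d : cell) : bool :=
  (c.2 < d.2)%N || ((c.2 == d.2) && (c.1 < d.1)%N).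
Definition cell_le (c d : cell) : bool := cell_lt c d || (c == d).

(* Delta_L in Q[X_N, Y_N] for a lattice diagram L (a duplicate-free list of
   cells) with N cells: det (x_r^{p_t} y_r^{q_t}), cells sorted increasingly *)
Definition Delta (N : nat) (L : seq cell) : QXY N :=
  let sL := sort cell_le L in
  \det (\matrix_(r < N, t < N)
          (xv N r ^+ (nth (0%N, 0%N) sL t).1 * yv N r ^+ (nth (0%N, 0%N) sL t).2)).

Definition in_span_derivs (N : nat) (D Q : QXY N) : Prop :=
  exists s : seq ('X_{1..N + N} * rat), Q = \sum_(e <- s) e.2 *: mderivm e.1 D.

Definition is_partition (mu : seq nat) (m : nat) : bool :=
  [&& sorted geq mu, all (fun x => 0 < x)%N mu & sumn mu == m].

Definition ferrers (mu : seq nat) : seq cell :=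
  [seq (a, b) | a <- iota 0 (size mu), b <- iota 0 (nth 0%N mu a)].

Definition shadow (mu : seq nat) (i j : nat) : seq cell :=
  [seq c <- ferrers mu | (i <= c.1)%N && (j <= c.2)%N].

Definition kcells (S : seq cell) (k : nat) (cs : seq cell) : bool :=
  [&& sorted cell_lt cs, size cs == k & all (fun c => c \in S) cs].

Definition remove_cells (L cs : seq cell) : seq cell := [seq c <- L | c \notin cs].

(* M^k_{i,j} = sum of M_{mu \ {c_1..c_k}} over k-subsets of S_mu(i,j), in Q[X_n,Y_n] *)
Definition inMk (n : nat) (mu : seq nat) (i j k : nat) (Q : QXY n) : Prop :=
  exists s : seq (seq cell * QXY n),
    (forall e, e \in s -> kcells (shadow mu i j) k e.1 /\
         in_span_derivs n (Delta n (remove_cells (ferrers mu) e.1)) e.2)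
    /\ Q = \sum_(e <- s) e.2.

Definition Ik (n : nat) (mu : seq nat) (i j k : nat) (P : QXY n) : Prop :=
  forall Q, inMk n mu i j k Q -> diffop n P Q = 0.

Definition inI (N : nat) (R P : QXY N) : Prop :=
  forall m : 'X_{1..N + N}, diffop N P (mderivm m R) = 0.

Definition embed (n k : nat) (P : QXY n) : QXY (n + k) :=
  mmap (fun c : rat => c%:MP)
    (fun v : 'I_(n + n) => match split v with
                          | inl r => xv (n + k) (lshift k r)
                          | inr r => yv (n + k) (lshift k r) end) P.

(* multi-index of d x_{n+1}^{a_1} d y_{n+1}^{b_1} ... d x_{n+k}^{a_k} d y_{n+k}^{b_k},
   where cs = [:: (a_1,b_1); ...; (a_k,b_k)] *)
Definition tuple_mono (n k : nat) (cs : seq cell) : 'X_{1..(n + k) + (n + k)} :=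
  [multinom (match split i with
             | inl r => if (n <= r)%N then (nth (0%N, 0%N) cs (r - n)).1 else 0%N
             | inr r => if (n <= r)%N then (nth (0%N, 0%N) cs (r - n)).2 else 0%N
             end) | i < (n + k) + (n + k)].

(* Main.v *)
Require Import Defs.
From HB Require Import structures.
From mathcomp Require Import all_boot all_algebra.
From mathcomp Require Import mpoly.
From mathcomp Require Import fingroup perm.
Import GRing.Theory.
Local Open Scope ring_scope.
Lemma ord_split_ind m n (P : 'I_(m+n) -> Prop) :
  (forall r, P (lshift n r)) -> (forall r, P (rshift m r)) -> forall i, P i.
Proof. move=> Hl Hr i; rewrite -(splitK i); case: (split i) => r /=; [exact: Hl|exact: Hr]. Qed.
Lemma split_lsh m n (r : 'I_m) : split (lshift n r) = inl r.
Proof. exact: (unsplitK (inl r)). Qed.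
Lemma split_rsh m n (r : 'I_n) : split (rshift m r) = inr r.
Proof. exact: (unsplitK (inr r)). Qed.

Notation MN n k := ('X_{1..(n + k) + (n + k)}).

Definition femb n k (v : 'I_(n+n)) : 'I_((n+k)+(n+k)) :=
  match split v with inl r => lshift (n+k) (lshift k r) | inr r => rshift (n+k) (lshift k r) end.
Definition isfr n k (r : 'I_(n+k)) : bool := if split r is inl _ then true else false.
Definition isf n k (i : 'I_((n+k)+(n+k))) : bool :=
  match split i with inl r => isfr n k r | inr r => isfr n k r end.
Definition mfirst n k (m : MN n k) : 'X_{1..n+n} := [multinom m (femb n k v) | v < n + n].
Definition mlast n k (m : MN n k) : MN n k := [multinom (if isf n k i then 0%N else m i) | i < _].
Definition membr n k (e : 'X_{1..n+n}) (lr : bool) (r : 'I_(n+k)) : nat :=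
  match split r with inl r0 => e (if lr then lshift n r0 else rshift n r0) | inr _ => 0%N end.
Definition memb n k (e : 'X_{1..n+n}) : MN n k :=
  [multinom (match split i with inl r => membr n k e true r | inr r => membr n k e false r end) | i < _].

Ltac splt := rewrite ?split_lsh ?split_rsh /=.

Lemma mdecomp n k (m : MN n k) : m = (memb n k (mfirst n k m) + mlast n k m)%MM.
Proof.
apply/mnmP; elim/ord_split_ind => r; elim/ord_split_ind: r => r;
 rewrite mnmDE; do 3 (rewrite ?mnmE /isf /membr /isfr /femb; splt); by rewrite ?addn0.
Qed.

Lemma mfirst_memb n k e w : mfirst n k (memb n k e + mlast n k w)%MM = e.
Proof.
apply/mnmP; elim/ord_split_ind => r; rewrite ?mnmDE; do 3 (rewrite ?mnmE ?mnmDE /isf /membr /isfr /femb; splt); by rewrite ?addn0.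
Qed.

Lemma mlast_memb n k e w : mlast n k (memb n k e + mlast n k w)%MM = mlast n k w.
Proof.
apply/mnmP; elim/ord_split_ind => r; elim/ord_split_ind: r => r;
 do 3 (rewrite ?mnmE ?mnmDE /isf /membr /isfr /femb; splt); by rewrite ?addn0.
Qed.
Lemma mlastK n k (m : MN n k) : mlast n k (mlast n k m) = mlast n k m.
Proof. apply/mnmP => i; rewrite !mnmE; by case: (isf n k i). Qed.

Lemma memb_islast n k (e : 'X_{1..n+n}) (w : MN n k) : mlast n k w = w -> mfirst n k (memb n k e + w)%MM = e /\ mlast n k (memb n k e + w)%MM = w.
Proof. move=> <-; by rewrite mfirst_memb mlast_memb. Qed.

Lemma mcond_eq n k (m w : MN n k) (e : 'X_{1..n+n}) : mlast n k w = w ->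
  ((mlast n k m == w) && (mfirst n k m == e)) = (m == (memb n k e + w)%MM).
Proof.
move=> Hw; apply/idP/idP.
- case/andP => /eqP <- /eqP <-; by rewrite -mdecomp.
- move/eqP => ->; have [-> ->] := memb_islast _ _ e _ Hw; by rewrite !eqxx.
Qed.

Lemma sum_pick (T : eqType) (R : nmodType) (r : seq T) (a : T) (F : T -> R) :
  uniq r -> \sum_(m <- r | m == a) F m = if a \in r then F a else 0.
Proof.
elim: r => [|x r IH] /=; first by rewrite big_nil.
case/andP => xr ur; rewrite big_cons IH // in_cons.
case: (eqVneq x a) xr => [->|nxa] xr /=.
  by rewrite (negbTE xr) addr0.
by [].
Qed.

Definition phi n k (w : MN n k) (Z : QXY (n+k)) : QXY n :=
  \sum_(m <- msupp Z | mlast n k m == w) Z@_m *: 'X_[mfirst n k m].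

Lemma phi_coef n k (w : MN n k) Z e : mlast n k w = w ->
  (phi n k w Z)@_e = Z@_(memb n k e + w)%MM.
Proof.
move=> Hw; rewrite /phi raddf_sum /=.
rewrite (eq_bigr (fun m => if mfirst n k m == e then Z@_m else 0)); last first.
  by move=> m _; rewrite mcoeffZ mcoeffX; case: eqP => _; rewrite ?mulr1 ?mulr0.
rewrite -big_mkcondr /=.
rewrite (eq_bigl (fun m => m == (memb n k e + w)%MM)); last by move=> m; rewrite mcond_eq.
rewrite sum_pick ?msupp_uniq //; case: ifP => // /negbT; by rewrite mcoeff_msupp negbK => /eqP.
Qed.

Lemma phiD n k (w : MN n k) Z1 Z2 : mlast n k w = w -> phi n k w (Z1 + Z2) = phi n k w Z1 + phi n k w Z2.
Proof. move=> Hw; apply/mpolyP => e; by rewrite mcoeffD !phi_coef // mcoeffD. Qed.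
Lemma phiZ n k (w : MN n k) c Z : mlast n k w = w -> phi n k w (c *: Z) = c *: phi n k w Z.
Proof. move=> Hw; apply/mpolyP => e; by rewrite mcoeffZ !phi_coef // mcoeffZ. Qed.
Lemma phi0 n k (w : MN n k) : mlast n k w = w -> phi n k w 0 = 0.
Proof. move=> Hw; apply/mpolyP => e; by rewrite phi_coef // !mcoeff0. Qed.
Lemma phi_sum n k (w : MN n k) (T : Type) (r : seq T) (F : T -> QXY (n+k)) : mlast n k w = w ->
  phi n k w (\sum_(x <- r) F x) = \sum_(x <- r) phi n k w (F x).
Proof.
move=> Hw; elim: r => [|x r IH]; first by rewrite !big_nil phi0.
by rewrite !big_cons phiD // IH.
Qed.
Lemma phi_eq0 n k (Z : QXY (n+k)) : (forall w, mlast n k w = w -> phi n k w Z = 0) -> Z = 0.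
Proof.
move=> H; apply/mpolyP => m; rewrite mcoeff0 (mdecomp n k m).
by rewrite -phi_coef ?mlastK // H ?mlastK // mcoeff0.
Qed.
Lemma mlastD n k (a b : MN n k) : mlast n k (a + b)%MM = (mlast n k a + mlast n k b)%MM.
Proof. apply/mnmP => i; rewrite mnmE !mnmDE !mnmE; by case: (isf n k i). Qed.

Lemma membD n k (a b : 'X_{1..n+n}) : memb n k (a + b)%MM = (memb n k a + memb n k b)%MM.
Proof.
apply/mnmP; elim/ord_split_ind => r; elim/ord_split_ind: r => r;
  do 3 (rewrite ?mnmE ?mnmDE /isf /membr /isfr /femb; splt); by rewrite ?addn0.
Qed.

Lemma last_or_first n k (v : MN n k) (e : 'X_{1..n+n}) i : mlast n k v = v ->
  (memb n k e i = 0%N) \/ (v i = 0%N).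
Proof.
move=> <-; move: i; elim/ord_split_ind => r; elim/ord_split_ind: r => r;
  do 3 (rewrite ?mnmE ?mnmDE /isf /membr /isfr /femb; splt); by [right|left].
Qed.

Lemma last_first0 n k (v : MN n k) (r : 'I_n) : mlast n k v = v ->
  v (lshift (n+k) (lshift k r)) = 0%N /\ v (rshift (n+k) (lshift k r)) = 0%N.
Proof.
move=> <-; rewrite !mnmE /isf /isfr; splt; splt; by split.
Qed.

Lemma prod_split4 n k (F : 'I_((n+k)+(n+k)) -> nat) :
  (\prod_(i < (n+k)+(n+k)) F i =
   (\prod_(r < n) F (lshift (n+k) (lshift k r))) * (\prod_(s < k) F (lshift (n+k) (rshift n s))) *
   ((\prod_(r < n) F (rshift (n+k) (lshift k r))) * (\prod_(s < k) F (rshift (n+k) (rshift n s)))))%N.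
Proof. by rewrite big_split_ord /= !big_split_ord. Qed.

Lemma prod_split2 n (F : 'I_(n+n) -> nat) :
  (\prod_(i < n+n) F i = (\prod_(r < n) F (lshift n r)) * (\prod_(r < n) F (rshift n r)))%N.
Proof. by rewrite big_split_ord. Qed.

Lemma phi_derivF n k (w : MN n k) Z (e' : 'X_{1..n+n}) : mlast n k w = w ->
  phi n k w (Z^`M[memb n k e']) = (phi n k w Z)^`M[e'].
Proof.
move=> Hw; apply/mpolyP => e; rewrite phi_coef // !mcoeff_mderivm phi_coef //.
rewrite membD addmA; congr (_ *+ _).
rewrite prod_split4 prod_split2.
rewrite [X in (_ * X * _)%N]big1 ?muln1; last first.
  move=> s _; do 3 (rewrite ?mnmE ?mnmDE /isf /membr /isfr /femb; splt); by rewrite ffactn0.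
rewrite [X in (_ * (_ * X))%N]big1 ?muln1; last first.
  move=> s _; do 3 (rewrite ?mnmE ?mnmDE /isf /membr /isfr /femb; splt); by rewrite ffactn0.
congr (_ * _)%N; apply: eq_bigr => r _; have [w1 w2] := last_first0 _ _ w r Hw;
  rewrite !mnmDE ?w1 ?w2 addn0; do 3 (rewrite ?mnmE ?mnmDE /isf /membr /isfr /femb; splt); by [].
Qed.

Lemma phi_derivL n k (u v : MN n k) Z : mlast n k u = u -> mlast n k v = v ->
  phi n k u (Z^`M[v]) = (\prod_(i < (n+k)+(n+k)) ((v + u)%MM i)^_(v i))%:R *: phi n k (u + v)%MM Z.
Proof.
move=> Hu Hv; have Huv : mlast n k (u + v)%MM = (u + v)%MM by rewrite mlastD Hu Hv.
apply/mpolyP => e; rewrite mcoeffZ !phi_coef // mcoeff_mderivm.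
rewrite mulr_natl; congr (_ *+ _).
  congr (_@_ _); by rewrite addmC addmA.
apply: eq_bigr; move=> i _; rewrite !mnmDE.
case: (last_or_first _ _ v e i Hv) => ->; by rewrite ?ffactn0 ?add0n.
Qed.
Lemma mfirst_memb0 n k (e : 'X_{1..n+n}) : mfirst n k (memb n k e) = e.
Proof.
apply/mnmP; elim/ord_split_ind => r; do 3 (rewrite ?mnmE ?mnmDE /isf /membr /isfr /femb; splt); by [].
Qed.

Lemma memb_inj n k : injective (memb n k).
Proof. by move=> a b H; rewrite -(mfirst_memb0 n k a) H mfirst_memb0. Qed.

Lemma diffop_gen N (P Q : QXY N) (r : seq 'X_{1..N+N}) : uniq r -> {subset msupp P <= r} ->
  diffop N P Q = \sum_(m <- r) P@_m *: Q^`M[m].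
Proof.
move=> ur sub; rewrite /diffop [RHS](bigID (fun m => m \in msupp P)) /=.
rewrite [X in _ + X]big1 ?addr0; last first.
  by move=> m /memN_msupp_eq0 ->; rewrite scale0r.
rewrite -[RHS]big_filter; apply: perm_big; apply: uniq_perm.
- exact: msupp_uniq.
- by rewrite filter_uniq.
- move=> m; rewrite mem_filter; apply/idP/idP => [H|/andP[]//]; by rewrite H sub.
Qed.

Lemma prodR_split4 (R : comRingType) n k (F : 'I_((n+k)+(n+k)) -> R) :
  \prod_(i < (n+k)+(n+k)) F i =
   (\prod_(r < n) F (lshift (n+k) (lshift k r))) * (\prod_(s < k) F (lshift (n+k) (rshift n s))) *
   ((\prod_(r < n) F (rshift (n+k) (lshift k r))) * (\prod_(s < k) F (rshift (n+k) (rshift n s)))).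
Proof. by rewrite big_split_ord /= !big_split_ord. Qed.

Lemma embedE n k (P : QXY n) : embed n k P = \sum_(e <- msupp P) P@_e *: 'X_[memb n k e].
Proof.
rewrite /embed /mmap; apply: eq_bigr => e _; rewrite mul_mpolyC; congr (_ *: _).
rewrite /mmap1 mpolyXE_id prodR_split4 big_split_ord /=.
rewrite [X in _ * X * _]big1 ?mulr1; last first.
  move=> s _; do 3 (rewrite ?mnmE ?mnmDE /isf /membr /isfr /femb; splt); by rewrite expr0.
rewrite [X in _ * (_ * X)]big1 ?mulr1; last first.
  move=> s _; do 3 (rewrite ?mnmE ?mnmDE /isf /membr /isfr /femb; splt); by rewrite expr0.
by congr (_ * _); apply: eq_bigr => r _; do 3 (rewrite ?mnmE ?mnmDE /isf /membr /isfr /femb /xv /yv; splt).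
Qed.

Lemma embed_coef n k (P : QXY n) e : (embed n k P)@_(memb n k e) = P@_e.
Proof.
rewrite embedE raddf_sum /=.
rewrite (eq_bigr (fun e' => if e' == e then P@_e' else 0)); last first.
  move=> e' _; rewrite mcoeffZ mcoeffX (inj_eq (@memb_inj n k)).
  by case: eqP => _; rewrite ?mulr1 ?mulr0.
rewrite -big_mkcond /= sum_pick ?msupp_uniq //; case: ifP => // /negbT.
by rewrite mcoeff_msupp negbK => /eqP.
Qed.

Lemma diffop_embed n k (P : QXY n) Z :
  diffop (n+k) (embed n k P) Z = \sum_(e <- msupp P) P@_e *: Z^`M[memb n k e].
Proof.
rewrite (@diffop_gen _ _ _ (map (memb n k) (msupp P))).
- by rewrite big_map; apply: eq_bigr => e _; rewrite embed_coef.
- by rewrite map_inj_uniq ?msupp_uniq //; apply: memb_inj.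
- move=> m; rewrite mcoeff_msupp; apply: contraR => Hm.
  rewrite embedE raddf_sum /= big1_seq // => e /= He.
  rewrite mcoeffZ mcoeffX; case: eqP; rewrite ?mulr0 // => E.
  by move: Hm; rewrite -E map_f.
Qed.

Lemma phi_diffop n k (w : MN n k) (P : QXY n) Z : mlast n k w = w ->
  phi n k w (diffop (n+k) (embed n k P) Z) = diffop n P (phi n k w Z).
Proof.
move=> Hw; rewrite diffop_embed phi_sum //; apply: eq_bigr => e _.
by rewrite phiZ // phi_derivF.
Qed.

Lemma inI_phi n k (R : QXY (n+k)) (P : QXY n) :
  inI (n+k) R (embed n k P) <->
  (forall m w, mlast n k w = w -> diffop n P (phi n k w (R^`M[m])) = 0).
Proof.
split.
- move=> H m w Hw; by rewrite -phi_diffop // H phi0.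
- move=> H m; apply: phi_eq0 => w Hw; by rewrite phi_diffop // H.
Qed.
Definition sLd (L : seq cell) := sort cell_le L.
Definition dw n k (w : MN n k) (s : 'I_k) : cell :=
  (w (lshift (n+k) (rshift n s)), w (rshift (n+k) (rshift n s))).
Definition Bm n k (L : seq cell) (w : MN n k) : 'M[QXY n]_(n+k) :=
  \matrix_(r, t) match split r with
    | inl r0 => xv n r0 ^+ (nth (0%N,0%N) (sLd L) t).1 * yv n r0 ^+ (nth (0%N,0%N) (sLd L) t).2
    | inr s => ((nth (0%N,0%N) (sLd L) t == dw n k w s)%:R) end.
Definition monoS n k (L : seq cell) (sg : 'S_(n+k)) : MN n k :=
  [multinom (match split i with inl r => (nth (0%N,0%N) (sLd L) (sg r)).1
                          | inr r => (nth (0%N,0%N) (sLd L) (sg r)).2 end) | i < _].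

Lemma prodA_mono n k L (sg : 'S_(n+k)) :
  \prod_r (xv (n+k) r ^+ (nth (0%N,0%N) (sLd L) (sg r)).1 * yv (n+k) r ^+ (nth (0%N,0%N) (sLd L) (sg r)).2)
  = 'X_[monoS n k L sg].
Proof.
rewrite [RHS]mpolyXE_id [RHS]big_split_ord big_split /=; congr (_ * _); apply: eq_bigr => r _;
  by rewrite mnmE; splt.
Qed.

Lemma phiX n k (w m : MN n k) : mlast n k w = w ->
  phi n k w 'X_[m] = if mlast n k m == w then 'X_[mfirst n k m] else 0.
Proof.
move=> Hw; rewrite /phi msuppX big_mkcond big_seq1 mcoeffX eqxx scale1r.
by case: ifP.
Qed.

Lemma mlast_mono_eq n k L (sg : 'S_(n+k)) (w : MN n k) : mlast n k w = w ->
  (mlast n k (monoS n k L sg) == w) = [forall s, nth (0%N,0%N) (sLd L) (sg (rshift n s)) == dw n k w s].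
Proof.
move=> Hw; apply/eqP/forallP.
- move=> E s; rewrite /dw -E; do 3 (rewrite ?mnmE /isf /isfr; splt).
  by rewrite -surjective_pairing.
- move=> H; apply/mnmP; elim/ord_split_ind => r; elim/ord_split_ind: r => r;
   rewrite -[in RHS]Hw; do 3 (rewrite ?mnmE /isf /isfr; splt); try done;
   by move/eqP: (H r) => ->.
Qed.
Lemma mfirst_mono n k L (sg : 'S_(n+k)) :
  'X_[mfirst n k (monoS n k L sg)] = \prod_(r0 < n)
     (xv n r0 ^+ (nth (0%N,0%N) (sLd L) (sg (lshift k r0))).1 * yv n r0 ^+ (nth (0%N,0%N) (sLd L) (sg (lshift k r0))).2).
Proof.
rewrite mpolyXE_id big_split_ord big_split /=; congr (_ * _); apply: eq_bigr; move=> r _;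
  by do 3 (rewrite ?mnmE /femb; splt).
Qed.

Lemma prodB n k L (w : MN n k) (sg : 'S_(n+k)) :
  \prod_r Bm n k L w r (sg r) =
  (if [forall s, nth (0%N,0%N) (sLd L) (sg (rshift n s)) == dw n k w s] then 1 else 0) *
  \prod_(r0 < n) (xv n r0 ^+ (nth (0%N,0%N) (sLd L) (sg (lshift k r0))).1 * yv n r0 ^+ (nth (0%N,0%N) (sLd L) (sg (lshift k r0))).2).
Proof.
rewrite big_split_ord /= mulrC; congr (_ * _); last first.
  by apply: eq_bigr; move=> r _; rewrite mxE; splt.
case: forallP => H.
  by apply: big1 => s _; rewrite mxE; splt; rewrite H.
have [s Hs] : exists s, ~~ (nth (0%N,0%N) (sLd L) (sg (rshift n s)) == dw n k w s).
  by apply/existsP; rewrite -negb_forall; apply/forallP.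
rewrite (bigD1 s) //= mxE; splt; by rewrite (negbTE Hs) mul0r.
Qed.

Lemma sign_scale N (b : bool) (X : QXY N) : (-1) ^+ b * X = ((-1) ^+ b : rat) *: X.
Proof. by case: b; rewrite ?expr0 ?expr1 ?mul1r ?scale1r ?mulN1r ?scaleN1r. Qed.

Lemma phi_Delta n k L (w : MN n k) : mlast n k w = w ->
  phi n k w (Delta (n+k) L) = \det (Bm n k L w).
Proof.
move=> Hw; rewrite /Delta /= -/(sLd L) /determinant phi_sum //; apply: eq_bigr => sg _.
rewrite !sign_scale phiZ //; congr (_ *: _).
rewrite (eq_bigr (fun r => xv (n+k) r ^+ (nth (0%N,0%N) (sLd L) (sg r)).1 * yv (n+k) r ^+ (nth (0%N,0%N) (sLd L) (sg r)).2)); last by move=> r _; rewrite mxE.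
rewrite prodA_mono phiX // mlast_mono_eq // prodB mfirst_mono.
by case: ifP; rewrite ?mul1r ?mul0r.
Qed.
From mathcomp Require Import zify.
Lemma cell_le_total : total cell_le.
Proof.
move=> [a b] [c d]; rewrite /cell_le /cell_lt /= !xpair_eqE.
case: (ltngtP b d) => //= Hbd; case: (ltngtP a c) => //=; by rewrite ?orbT.
Qed.

Lemma cell_le_trans : transitive cell_le.
Proof.
move=> [a b] [c d] [e f]; rewrite /cell_le /cell_lt /= !xpair_eqE; lia.
Qed.

Lemma path_le_lt x s : uniq (x :: s) -> path cell_le x s -> path cell_lt x s.
Proof.
elim: s x => [//|y s IH] x /= /andP [Hx Hu] /andP [Hxy Hp].
rewrite IH //; rewrite andbT.
move: Hxy; rewrite /cell_le; case/orP => //= /eqP Exy.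
by move: Hx; rewrite Exy in_cons eqxx.
Qed.

Lemma sorted_le_lt s : uniq s -> sorted cell_le s -> sorted cell_lt s.
Proof. by case: s => //= x s Hu Hp; apply: path_le_lt. Qed.

Lemma detB_notin n k L (w : MN n k) s : size L = (n + k)%N ->
  dw n k w s \notin L -> \det (Bm n k L w) = 0.
Proof.
move=> HL Hs; rewrite (expand_det_row _ (rshift n s)) big1 // => j _.
rewrite mxE; splt.
have -> : (nth (0%N,0%N) (sLd L) j == dw n k w s) = false.
  apply/negbTE; apply: contra Hs => /eqP <-.
  by rewrite -(mem_sort cell_le) mem_nth // size_sort HL.
by rewrite mul0r.
Qed.

Lemma detB_dup n k L (w : MN n k) s1 s2 : s1 != s2 ->
  dw n k w s1 = dw n k w s2 -> \det (Bm n k L w) = 0.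
Proof.
move=> Hs Hd; apply: (determinant_alternate (i1 := rshift n s1) (i2 := rshift n s2)).
  by apply: contra Hs => /eqP /rshift_inj ->.
by move=> j; rewrite !mxE; splt; rewrite Hd.
Qed.
Lemma detB_minor n k L (w : MN n k) : uniq L -> size L = (n + k)%N ->
  (forall s, dw n k w s \in L) -> injective (dw n k w) ->
  exists c : rat, c != 0 /\
    c *: \det (Bm n k L w) = Delta n (remove_cells L [seq dw n k w s | s <- enum 'I_k]).
Proof.
move=> uL sizeL inL injd.
set d := dw n k w.
set D := [seq d s | s <- enum 'I_k].
have usL : uniq (sLd L) by rewrite sort_uniq.
have ssL : size (sLd L) = (n + k)%N by rewrite size_sort.
have Hidx : forall s, (index (d s) (sLd L) < n + k)%N.
  by move=> s; rewrite -ssL index_mem mem_sort inL.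
pose tau (s : 'I_k) : 'I_(n+k) := Ordinal (Hidx s).
have Htau : forall s, nth (0%N,0%N) (sLd L) (tau s) = d s.
  by move=> s; rewrite /= nth_index // mem_sort inL.
have nthI : forall t1 t2 : 'I_(n+k),
    (nth (0%N,0%N) (sLd L) t1 == nth (0%N,0%N) (sLd L) t2) = (t1 == t2).
  by move=> t1 t2; rewrite nth_uniq ?ssL ?ltn_ord.
have injtau : injective tau.
  by move=> s1 s2 /eqP; rewrite -nthI !Htau => /eqP /injd.
pose S := [seq t <- enum 'I_(n+k) | t \notin codom tau].
have memD : forall t : 'I_(n+k), (t \in codom tau) = (nth (0%N,0%N) (sLd L) t \in D).
  move=> t; apply/codomP/mapP => [[s ->]|[s _ Hs]].
    by exists s; rewrite ?mem_enum ?Htau.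
  by exists s; apply/eqP; rewrite -nthI Htau Hs.
pose f := fun t : 'I_(n+k) => nth (0%N,0%N) (sLd L) t.
have EsL : map f (enum 'I_(n+k)) = sLd L.
  have -> : map f (enum 'I_(n+k)) =
            map (nth (0%N,0%N) (sLd L)) (map val (enum 'I_(n+k))) by rewrite -map_comp.
  by rewrite val_enum_ord -ssL map_nth_iota0 // take_size.
have Hmap : map f S = [seq c <- sLd L | c \notin D].
  rewrite -EsL filter_map; congr map; apply: eq_filter => t /=; by rewrite memD.
have uD : uniq D by rewrite map_inj_uniq ?enum_uniq.
have sizeS : size S = n.
  have -> : size S = size [seq c <- sLd L | c \notin D] by rewrite -Hmap size_map.
  have Hc := count_predC (mem D) (sLd L).
  have HD : count (mem D) (sLd L) = k.
    rewrite -size_filter; have -> : k = size D by rewrite size_map size_enum_ord.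
    apply: perm_size; apply: uniq_perm; rewrite ?filter_uniq //.
    move=> x; rewrite mem_filter; apply/andP/idP => [[] //|Hx]; split => //.
    by case/mapP: Hx => s _ ->; rewrite mem_sort inL.
  rewrite size_filter; move: Hc; rewrite HD ssL => Hc.
  have -> : count (fun c => c \notin D) (sLd L) = count (predC (mem D)) (sLd L) by apply: eq_count.
  lia.
pose g (j : 'I_n) : 'I_(n+k) := nth (lshift k j) S j.
have gS : forall j, g j \in S by move=> j; rewrite /g mem_nth // sizeS.
have gnot : forall j, g j \notin codom tau.
  by move=> j; move: (gS j); rewrite mem_filter => /andP [].
have uS : uniq S by rewrite filter_uniq // enum_uniq.
have ginj : injective g.
  move=> j1 j2; rewrite /g (set_nth_default (lshift k j1) (lshift k j2)) ?sizeS //.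
  by move/eqP; rewrite nth_uniq ?sizeS // => /eqP /val_inj.
have gval : forall j, nth (0%N,0%N) (sLd L) (g j) = nth (0%N,0%N) [seq c <- sLd L | c \notin D] j.
  by move=> j; rewrite -Hmap (nth_map (lshift k j)) ?sizeS.
pose pi (c : 'I_(n+k)) : 'I_(n+k) := match split c with inl j => g j | inr s => tau s end.
have piinj : injective pi.
  move=> c1 c2; rewrite -(splitK c1) -(splitK c2) /pi.
  case: (split c1) => a; case: (split c2) => b /=; splt.
  - by move/ginj ->.
  - by move=> E; move: (gnot a); rewrite E codom_f.
  - by move=> E; move: (gnot b); rewrite -E codom_f.
  - by move/injtau ->.
pose p := perm piinj.
pose Aul := \matrix_(r0 < n, j < n) Bm n k L w (lshift k r0) (g j).
pose Aur := \matrix_(r0 < n, s < k) Bm n k L w (lshift k r0) (tau s).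
have EC : col_perm p (Bm n k L w) = block_mx Aul Aur 0 1%:M.
  apply/matrixP => r c; rewrite [LHS]mxE permE -(splitK r) -(splitK c).
  case: (split r) => a; case: (split c) => b /=;
    rewrite ?block_mxEul ?block_mxEur ?block_mxEdl ?block_mxEdr !mxE /pi; splt; try done.
  - rewrite (_ : (_ == _) = false) //; apply/negbTE.
    rewrite -[dw n k w a]/(d a) -Htau nthI; apply: contra (gnot b) => /eqP ->; exact: codom_f.
  - by rewrite nth_index ?mem_sort ?inL // /d (inj_eq injd) eq_sym.
have Hdet : \det (Bm n k L w) * (-1) ^+ (p^-1)%g = \det Aul.
  have := det_ublock Aul Aur (1%:M : 'M[QXY n]_k); rewrite -EC det1 mulr1 col_permE det_mulmx det_perm.
  by [].
exists ((-1) ^+ (p^-1)%g); split; first by rewrite signr_eq0.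
rewrite -sign_scale mulrC Hdet.
rewrite /Delta /remove_cells /= -(filter_sort cell_le_total cell_le_trans).
congr (\det _); apply/matrixP => r0 j; rewrite !mxE; splt; by rewrite gval.
Qed.
Lemma cell_lt_irr : irreflexive cell_lt.
Proof. move=> [a b]; rewrite /cell_lt /=; lia. Qed.
Lemma cell_lt_trans : transitive cell_lt.
Proof. move=> [a b] [c d] [e f]; rewrite /cell_lt /=; lia. Qed.

Lemma ferrers_uniq mu : uniq (ferrers mu).
Proof.
apply: allpairs_uniq_dep; first exact: iota_uniq.
  by move=> a _; exact: iota_uniq.
by move=> [a b] [c d] _ _ /= [-> ->].
Qed.

Lemma ferrers_size mu : size (ferrers mu) = sumn mu.
Proof.
rewrite size_allpairs_dep; congr sumn.
rewrite (eq_map (fun a => size_iota 0 _)) map_nth_iota0 // take_size //.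
Qed.

Lemma mlast0 n k : mlast n k 0%MM = 0%MM.
Proof. apply/mnmP => i; rewrite !mnmE; by case: (isf n k i). Qed.

Lemma tuple_last n k cs : mlast n k (tuple_mono n k cs) = tuple_mono n k cs.
Proof.
apply/mnmP; elim/ord_split_ind => r; elim/ord_split_ind: r => r;
  do 3 (rewrite ?mnmE /isf /isfr; splt) => //; by rewrite leqNgt ltn_ord.
Qed.

Lemma dw_tuple n k cs s : dw n k (tuple_mono n k cs) s = nth (0%N,0%N) cs s.
Proof.
rewrite /dw !mnmE; splt; rewrite leq_addr addKn; by case: (nth _ _ _).
Qed.

Lemma map_nth_ord (T : Type) (x0 : T) (s : seq T) k : size s = k ->
  [seq nth x0 s (nat_of_ord i) | i <- enum 'I_k] = s.
Proof.
move=> <-; have -> : [seq nth x0 s (nat_of_ord i) | i <- enum 'I_(size s)] =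
   map (nth x0 s) (map val (enum 'I_(size s))) by rewrite -map_comp.
by rewrite val_enum_ord map_nth_iota0 // take_size.
Qed.

Lemma diffopD N (P Q1 Q2 : QXY N) : diffop N P (Q1 + Q2) = diffop N P Q1 + diffop N P Q2.
Proof. rewrite /diffop -big_split; apply: eq_bigr; move=> m _; by rewrite mderivmD scalerDr. Qed.
Lemma diffopZ N (P Q : QXY N) c : diffop N P (c *: Q) = c *: diffop N P Q.
Proof.
rewrite /diffop scaler_sumr; apply: eq_bigr; move=> m _; by rewrite mderivmZ !scalerA mulrC.
Qed.
Lemma diffop0 N (P : QXY N) : diffop N P 0 = 0.
Proof.
rewrite /diffop big1 // => m _.
have -> : (0 : QXY N)^`M[m] = 0 by rewrite mderivmE msupp0 big_nil.
by rewrite scaler0.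
Qed.
Lemma diffop_sum N (P : QXY N) (T : Type) (r : seq T) F :
  diffop N P (\sum_(x <- r) F x) = \sum_(x <- r) diffop N P (F x).
Proof.
elim: r => [|x r IH]; first by rewrite !big_nil diffop0.
by rewrite !big_cons diffopD IH.
Qed.

Lemma remove_cells_eq L D1 D2 : D1 =i D2 -> remove_cells L D1 = remove_cells L D2.
Proof. by move=> E; apply: eq_filter => c; rewrite E. Qed.
Lemma dw_le1 n k (w t ml : MN n k) s :
  ((dw n k t s).1 <= (dw n k (w + (t + ml))%MM s).1)%N /\
  ((dw n k t s).2 <= (dw n k (w + (t + ml))%MM s).2)%N.
Proof. rewrite /dw /= !mnmDE; split; lia. Qed.

Lemma inv_scale n (c : rat) (X Y : QXY n) : c != 0 -> c *: X = Y -> X = c^-1 *: Y.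
Proof. by move=> Hc <-; rewrite scalerA mulVf // scale1r. Qed.

Theorem mainTheorem4 (n k : nat) (mu : seq nat) (i j : nat) :
  is_partition mu (n + k) -> (i, j) \in ferrers mu ->
  forall P : QXY n,
    Ik n mu i j k P <->
    (forall cs : seq cell, kcells (shadow mu i j) k cs ->
       inI (n + k) (mderivm (tuple_mono n k cs) (Delta (n + k) (ferrers mu))) (embed n k P)).
Proof.
move=> Hpart _ P.
have uL : uniq (ferrers mu) := ferrers_uniq mu.
have sL : size (ferrers mu) = (n+k)%N.
  by rewrite ferrers_size; case/and3P: Hpart => _ _ /eqP.
have shL : forall c, c \in shadow mu i j -> c \in ferrers mu.
  by move=> c; rewrite mem_filter => /andP [].
split.
- move=> HI cs Hcs; apply/inI_phi => m w Hw.
  case/and3P: Hcs => Hsort /eqP Hsize Hall.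
  have Ht : mlast n k (tuple_mono n k cs) = tuple_mono n k cs := tuple_last n k cs.
  have Hml : mlast n k (mlast n k m) = mlast n k m := mlastK n k m.
  have Hv : mlast n k (tuple_mono n k cs + mlast n k m)%MM = (tuple_mono n k cs + mlast n k m)%MM.
    by rewrite mlastD Ht Hml.
  have E1 : ((Delta (n + k) (ferrers mu))^`M[tuple_mono n k cs])^`M[m] =
     ((Delta (n + k) (ferrers mu))^`M[(tuple_mono n k cs + mlast n k m)%MM])^`M[memb n k (mfirst n k m)].
    by rewrite -!mderivmDm -addmA [(mlast n k m + _)%MM]addmC -mdecomp.
  have HW : mlast n k (w + (tuple_mono n k cs + mlast n k m))%MM = (w + (tuple_mono n k cs + mlast n k m))%MM.
    by rewrite mlastD Hw Hv.
  rewrite E1 phi_derivF // phi_derivL // phi_Delta //.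
  set W := (w + (tuple_mono n k cs + mlast n k m))%MM.
  set c1 := (\prod_(_ < _) _)%:R.
  have Z0 : \det (Bm n k (ferrers mu) W) = 0 ->
      diffop n P ((c1 *: \det (Bm n k (ferrers mu) W))^`M[mfirst n k m]) = 0.
    move=> ->; rewrite scaler0.
    have -> : (0 : QXY n)^`M[mfirst n k m] = 0 by rewrite mderivmE msupp0 big_nil.
    exact: diffop0.
  case: (boolP [forall s, dw n k W s \in ferrers mu]) => [/forallP Hin|Hnin]; last first.
    apply: Z0; move: Hnin; rewrite negb_forall => /existsP [s Hs].
    exact: (detB_notin _ _ _ _ _ sL Hs).
  case: (injectiveP (dw n k W)) => [Hinj|/injectiveP/injectivePn [s1 [s2 Hs Hd]]]; last first.
    by apply: Z0; apply: (detB_dup _ _ _ _ _ _ Hs Hd).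
  have [c [Hc Hmin]] := detB_minor _ _ _ _ uL sL Hin Hinj.
  rewrite (inv_scale _ _ _ _ Hc Hmin).
  set D := [seq dw n k W s | s <- enum 'I_k].
  have uD : uniq D by rewrite map_inj_uniq ?enum_uniq.
  set cs' := sort cell_le D.
  rewrite (remove_cells_eq (ferrers mu) D cs'); last by move=> x; rewrite mem_sort.
  rewrite !mderivmZ scalerA.
  set Q := (c1 * c^-1) *: _.
  apply: HI; exists [:: (cs', Q)]; split; last by rewrite big_seq1.
  move=> e; rewrite inE => /eqP -> /=; split.
  + apply/and3P; split.
    * apply: sorted_le_lt; first by rewrite sort_uniq.
      exact: (sort_sorted cell_le_total).
    * by rewrite size_sort size_map size_enum_ord.
    * apply/allP => x; rewrite mem_sort => /mapP [s _ ->].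
      rewrite mem_filter Hin andbT.
      have Hs : (s < size cs)%N by rewrite Hsize ltn_ord.
      have := allP Hall _ (mem_nth (0%N,0%N) Hs); rewrite mem_filter => /andP [/andP [H1 H2] _].
      have [L1 L2] := dw_le1 n k w (tuple_mono n k cs) (mlast n k m) s.
      rewrite dw_tuple in L1 L2.
      by rewrite (leq_trans H1 L1) (leq_trans H2 L2).
  + by exists [:: (mfirst n k m, c1 * c^-1)]; rewrite big_seq1.
- move=> H Q [sq [Hs ->]]; rewrite diffop_sum big_seq big1 // => e He.
  have [Hk [s' ->]] := Hs e He.
  rewrite diffop_sum big1 // => x _; rewrite diffopZ.
  suff -> : diffop n P ((Delta n (remove_cells (ferrers mu) e.1))^`M[x.1]) = 0 by rewrite scaler0.
  move: Hk; case: e He => cs Q0 /= _ Hk.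
  have := H cs Hk; move/inI_phi => /(_ (memb n k x.1) 0%MM (mlast0 n k)).
  have Ht := tuple_last n k cs.
  rewrite phi_derivF ?mlast0 // phi_derivL ?mlast0 // add0m phi_Delta //.
  case/and3P: Hk => Hsort /eqP Hsize Hall.
  have ucs : uniq cs := sorted_uniq cell_lt_trans cell_lt_irr Hsort.
  have Hin : forall s, dw n k (tuple_mono n k cs) s \in ferrers mu.
    move=> s; rewrite dw_tuple; apply: shL; apply: (allP Hall); by rewrite mem_nth // Hsize.
  have Hinj : injective (dw n k (tuple_mono n k cs)).
    move=> s1 s2; rewrite !dw_tuple => /eqP; rewrite nth_uniq ?Hsize //; by move/eqP/val_inj.
  have [c [Hc Hmin]] := detB_minor _ _ _ _ uL sL Hin Hinj.
  have ED : [seq dw n k (tuple_mono n k cs) s | s <- enum 'I_k] = cs.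
    rewrite (eq_map (dw_tuple n k cs)); exact: map_nth_ord.
  rewrite ED in Hmin; rewrite (inv_scale _ _ _ _ Hc Hmin) !mderivmZ !diffopZ scalerA.
  set a := (_ * _).
  have Ha : a != 0.
    rewrite /a mulf_eq0 negb_or invr_eq0 Hc andbT Num.Theory.pnatr_eq0 -lt0n.
    apply: prodn_gt0 => v; by rewrite addm0 ffact_gt0.
  move/(congr1 (fun y => a^-1 *: y)); by rewrite scalerA mulVf // scale1r scaler0.
Qed.
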